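(* The integral subgroup $U$ equals its subgroup $U^1$.
   Context: For $f\in\mathbb{Q}[t,t^{-1}]$ let $\overline{f}(t)=f(t^{-1})$, and $\Phi=1+t^{-1}+t$. $\mathrm{PGL}(2,\mathbb{Q}[t,t^{-1}])$ is $\mathrm{GL}(2,\mathbb{Q}[t,t^{-1}])$ modulo unit scalar matrices, and $\mathrm{PGL}(2,\mathbb{Z}[t,t^{-1}])$ is the image of $\mathrm{GL}(2,\mathbb{Z}[t,t^{-1}])$ in it. The quaternionic group $\mathcal{Q}$ is the set of elements of $\mathrm{PGL}(2,\mathbb{Q}[t,t^{-1}])$ having a representative $\begin{pmatrix}g_1&g_2\\-\Phi\overline{g_2}&\overline{g_1}\end{pmatrix}$ with $g_1,g_2\in\mathbb{Q}[t,t^{-1}]$; the integral subgroup is $U=\mathcal{Q}\cap\mathrm{PGL}(2,\mathbb{Z}[t,t^{-1}])$, and $U^1$ is the subgroup of elements of $U$ having a representative $B$ with $\det B=1$. *)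

(* Defs.v *)
From HB Require Import structures.
From mathcomp Require Import all_boot all_order all_algebra.
Set Implicit Arguments. Unset Strict Implicit. Unset Printing Implicit Defensive.
Import Order.TTheory GRing.Theory Num.Theory.
Local Open Scope ring_scope.
Local Open Scope quotient_scope.

(* Ambient field: Q(t) = {fraction {poly rat}}.  The Laurent polynomial rings
   Q[t,t^-1] and Z[t,t^-1] are realised as subrings of Q(t), and
   GL(2, -), PGL(2, -) via 2x2 matrices over Q(t). *)
Definition QT := {fraction {poly rat}}.

Definition tvar : QT := tofrac 'X.

Definition laurentQ (f : QT) : Prop :=
  exists (p : {poly rat}) (k : nat), f = tofrac p / tvar ^+ k.

Definition laurentZ (f : QT) : Prop :=
  exists (p : {poly int}) (k : nat),
    f = tofrac (map_poly (fun z : int => z%:~R) p) / tvar ^+ k.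

Definition unitQ (u : QT) : Prop :=
  exists (c : rat) (n : int), c != 0 /\ u = tofrac (c%:P) * tvar ^ n.

Definition unitZ (u : QT) : Prop :=
  exists (b : bool) (n : int), u = (-1) ^+ b * tvar ^ n.

(* the involution f(t) |-> f(t^-1) of Q(t) (restricting to the bar of the
   paper on Q[t,t^-1]) : substitute t^-1 in numerator and denominator *)
Definition subst_inv (p : {poly rat}) : QT :=
  (map_poly (fun c : rat => tofrac (c%:P) : QT) p).[tvar^-1].
Definition bar (f : QT) : QT :=
  subst_inv (\n_(repr f)) / subst_inv (\d_(repr f)).

Definition Phi : QT := 1 + tvar^-1 + tvar.

Definition GL2Q (A : 'M[QT]_2) : Prop :=
  (forall i j, laurentQ (A i j)) /\ unitQ (\det A).
Definition GL2Z (A : 'M[QT]_2) : Prop :=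
  (forall i j, laurentZ (A i j)) /\ unitZ (\det A).

(* Elements of PGL(2,Q[t,t^-1]) are represented by A in GL2Q; two
   representatives define the same element iff they differ by a unit scalar. *)
Definition quat_mx (g1 g2 : QT) : 'M[QT]_2 :=
  \matrix_(i < 2, j < 2)
    if i == 0 then (if j == 0 then g1 else g2)
    else (if j == 0 then - (Phi * bar g2) else bar g1).

Definition in_quat (A : 'M[QT]_2) : Prop :=
  exists u g1 g2, [/\ unitQ u, laurentQ g1, laurentQ g2 & u *: A = quat_mx g1 g2].

Definition in_PGLZ (A : 'M[QT]_2) : Prop :=
  exists u, unitQ u /\ GL2Z (u *: A).

Definition in_U (A : 'M[QT]_2) : Prop := in_quat A /\ in_PGLZ A.

Definition in_U1 (A : 'M[QT]_2) : Prop :=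
  in_U A /\ exists u, unitQ u /\ \det (u *: A) = 1.

(* Main.v *)
Require Import Defs.
From HB Require Import structures.
From mathcomp Require Import all_boot all_order all_algebra.
From mathcomp Require Import zify ring lra.
Set Implicit Arguments. Unset Strict Implicit. Unset Printing Implicit Defensive.
Import Order.TTheory GRing.Theory Num.Theory.
Local Open Scope ring_scope.
Local Open Scope quotient_scope.

Lemma frac_repr (x : {ratio {poly rat}}) : (\pi_QT x) = tofrac \n_x / tofrac \d_x.
Proof.
have E : forall a : {poly rat}, tofrac a = \pi_QT (Ratio a 1).
  by move=> a; unlock tofrac.
rewrite !E.
change (\pi_QT x = FracField.mul (\pi_QT (Ratio \n_x 1)) (FracField.inv (\pi_QT (Ratio \d_x 1)))).
rewrite -FracField.pi_inv -FracField.pi_mul /FracField.invf /FracField.mulf /=.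
rewrite !numden_Ratio ?oner_neq0 // ?denom_ratioP //. have -> : \n_x * 1 = \n_x by exact: mulr1. have -> : 1 * \d_x = \d_x by exact: mul1r. by rewrite Ratio_numden.
Qed.

Lemma frac_decomp (f : QT) : f = tofrac \n_(repr f) / tofrac \d_(repr f).
Proof. by rewrite -frac_repr reprK. Qed.

Definition fC : rat -> QT := (@tofrac {poly rat} \o polyC).
Notation s := subst_inv.
Notation t := tvar.

Lemma substE p : s p = (map_poly fC p).[t^-1].
Proof. by rewrite /subst_inv; congr (_.[_]); apply: eq_map_poly. Qed.

Lemma t_neq0 : t != 0.
Proof. by rewrite /tvar tofrac_eq0 polyX_eq0. Qed.

Lemma sD p q : s (p + q) = s p + s q.
Proof. by rewrite !substE rmorphD hornerD. Qed.
Lemma sN p : s (- p) = - s p.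
Proof. by rewrite !substE rmorphN hornerN. Qed.
Lemma s0 : s 0 = 0.
Proof. by rewrite substE rmorph0 horner0. Qed.
Lemma sM p q : s (p * q) = s p * s q.
Proof. by rewrite !substE rmorphM hornerM. Qed.
Lemma sC c : s c%:P = fC c.
Proof. by rewrite !substE map_polyC hornerC. Qed.
Lemma s1 : s 1 = 1.
Proof. by rewrite sC /fC /= tofrac1. Qed.
Lemma sX : s 'X = t^-1.
Proof. by rewrite !substE map_polyX hornerX. Qed.
Lemma sXn n : s 'X^n = t^-1 ^+ n.
Proof. by rewrite !substE map_polyXn hornerXn. Qed.
Lemma sZ c p : s (c *: p) = fC c * s p.
Proof. by rewrite -mul_polyC sM sC. Qed.
Lemma ssum I (r : seq I) P (F : I -> {poly rat}) :
  s (\sum_(i <- r | P i) F i) = \sum_(i <- r | P i) s (F i).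
Proof.
rewrite substE rmorph_sum horner_sum; apply: eq_bigr => *; by rewrite substE.
Qed.

Lemma texp j m : (j <= m)%N -> t^-1 ^+ j * t ^+ m = t ^+ (m - j).
Proof.
move=> jm; rewrite -{1}(subnK jm) exprD mulrC -mulrA exprVn mulfV ?mulr1 //.
by rewrite expf_neq0 // t_neq0.
Qed.

Definition rv (p : {poly rat}) (m : nat) : {poly rat} :=
  \sum_(i < size p) p`_i *: 'X^(m - i).

Lemma rvE (p : {poly rat}) m : (size p <= m.+1)%N -> s p * t ^+ m = tofrac (rv p m).
Proof.
move=> sz; rewrite substE horner_coef size_map_poly mulr_suml /rv rmorph_sum.
apply: eq_bigr => i _; rewrite coef_map -mulrA texp; last first.
  move: (ltn_ord i) sz. move: (size p) (nat_of_ord i) => a b. lia.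
by rewrite -mul_polyC rmorphM rmorphXn.
Qed.

Lemma rv1 (p : {poly rat}) m : (rv p m).[1] = p.[1].
Proof.
rewrite /rv horner_sum horner_coef; apply: eq_bigr => i _.
by rewrite hornerZ hornerXn !expr1n.
Qed.

Lemma rvK (p : {poly rat}) m : (size p <= m.+1)%N -> s (rv p m) * t ^+ m = tofrac p.
Proof.
move=> sz; rewrite /rv ssum mulr_suml.
rewrite -[in RHS](coefK p) poly_def rmorph_sum; apply: eq_bigr => i _.
rewrite sZ sXn -mulrA texp; last by move: (ltn_ord i) sz; move: (size p) (nat_of_ord i) => a b; lia.
have -> : (m - (m - i) = i)%N by move: (ltn_ord i) sz; move: (size p) (nat_of_ord i) => a b; lia.
by rewrite -mul_polyC rmorphM rmorphXn.
Qed.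

Lemma s_neq0 p : p != 0 -> s p != 0.
Proof.
move=> p0; apply/eqP => sp0.
have := rvE (leqnSn (size p)); rewrite sp0 mul0r => /esym /eqP.
rewrite tofrac_eq0 => /eqP r0.
have := rvK (leqnSn (size p)); rewrite r0 s0 mul0r.
by move/esym/eqP; rewrite tofrac_eq0 (negbTE p0).
Qed.

Lemma barE (n d : {poly rat}) : d != 0 -> bar (tofrac n / tofrac d) = s n / s d.
Proof.
move=> d0; rewrite /bar.
set r := repr _.
have dr0 : \d_r != 0 by exact: denom_ratioP.
have : tofrac n / tofrac d = tofrac \n_r / tofrac \d_r by rewrite -frac_repr reprK.
have td0 : tofrac d != 0 :> QT by rewrite tofrac_eq0.
have tdr0 : tofrac \d_r != 0 :> QT by rewrite tofrac_eq0.
move/eqP. rewrite (eqr_div _ _ td0 tdr0) -!tofracM tofrac_eq => /eqP /(congr1 s).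
rewrite !sM => E.
have sd0 := s_neq0 d0; have sdr0 := s_neq0 dr0.
by apply/eqP; rewrite (eqr_div _ _ sdr0 sd0) E.
Qed.

Lemma frac_ex (x : QT) : exists n d, d != 0 /\ x = tofrac n / tofrac d.
Proof. exists \n_(repr x), \d_(repr x); split; [exact: denom_ratioP | exact: frac_decomp]. Qed.

Lemma barD x y : bar (x + y) = bar x + bar y.
Proof.
have [n1 [d1 [d10 ->]]] := frac_ex x; have [n2 [d2 [d20 ->]]] := frac_ex y.
have t1 : tofrac d1 != 0 :> QT by rewrite tofrac_eq0.
have t2 : tofrac d2 != 0 :> QT by rewrite tofrac_eq0.
rewrite (addf_div _ _ t1 t2) -!tofracM -tofracD !barE ?mulf_neq0 //.
by rewrite addf_div ?s_neq0 // sD !sM.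
Qed.

Lemma barM x y : bar (x * y) = bar x * bar y.
Proof.
have [n1 [d1 [d10 ->]]] := frac_ex x; have [n2 [d2 [d20 ->]]] := frac_ex y.
rewrite mulf_div -!tofracM !barE ?mulf_neq0 //.
by rewrite mulf_div !sM.
Qed.

Lemma barN x : bar (- x) = - bar x.
Proof.
have [n1 [d1 [d10 ->]]] := frac_ex x.
by rewrite -mulNr -tofracN !barE // sN mulNr.
Qed.


Lemma barV x : bar (x^-1) = (bar x)^-1.
Proof.
have [n1 [d1 [d10 ->]]] := frac_ex x.
have [->|n0] := eqVneq n1 0; first by rewrite tofrac0 !mul0r invr0 -(mul0r (tofrac d1)^-1) -tofrac0 barE // s0 mul0r invr0.
by rewrite invf_div !barE // invf_div.
Qed.

Lemma barC c : bar (fC c) = fC c.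
Proof. by rewrite -[fC c]divr1 /fC /= -tofrac1 barE ?oner_neq0 // s1 sC divr1. Qed.

Lemma bar1 : bar 1 = 1.
Proof. by have := barC 1; rewrite /fC /= polyC1 tofrac1. Qed.

Lemma bart : bar t = t^-1.
Proof.
have E : t = tofrac 'X / tofrac 1 by rewrite tofrac1 divr1.
by rewrite {1}E barE ?oner_neq0 // s1 sX divr1.
Qed.

Lemma bartV : bar t^-1 = t.
Proof. by rewrite barV bart invrK. Qed.

Lemma bar0 : bar 0 = 0.
Proof. by have := barD 0 0; rewrite addr0 => /eqP; rewrite -subr_eq subrr eq_sym => /eqP. Qed.

Lemma barXn x n : bar (x ^+ n) = bar x ^+ n.
Proof. by elim: n => [|n IH]; rewrite ?expr0 ?bar1 // !exprS barM IH. Qed.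

Lemma barXz x (k : int) : bar (x ^ k) = bar x ^ k.
Proof. by case: k => n; rewrite ?barV barXn. Qed.

Lemma bartz (k : int) : bar (t ^ k) = t ^ (- k).
Proof. by rewrite barXz bart exprz_inv. Qed.

Lemma bar_tofrac p : bar (tofrac p) = s p.
Proof. by rewrite -[tofrac p]divr1 -tofrac1 barE ?oner_neq0 // s1 divr1. Qed.

Lemma bar_s p : bar (s p) = tofrac p.
Proof.
elim/poly_ind: p => [|p c IH]; first by rewrite s0 bar0 rmorph0.
by rewrite sD sM sX sC barD barM IH bartV barC /fC /= tofracD tofracM.
Qed.

Lemma barPhi : bar Phi = Phi.
Proof. by rewrite /Phi !barD bar1 bart bartV addrAC. Qed.

Definition Nf (p1 p2 : {poly rat}) : QT := tofrac p1 * s p1 + Phi * (tofrac p2 * s p2).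

Lemma barNf p1 p2 : bar (Nf p1 p2) = Nf p1 p2.
Proof.
by rewrite /Nf barD !barM barPhi !bar_tofrac !bar_s [s p1 * _]mulrC [s p2 * _]mulrC.
Qed.

Lemma t_unit : t \is a GRing.unit.
Proof. by rewrite unitfE t_neq0. Qed.

Lemma tpow_eq1 (k : int) : t ^ k = 1 -> k = 0.
Proof.
have H n : t ^+ n = 1 -> n = 0%N.
  rewrite /tvar -tofracXn -tofrac1 => /eqP; rewrite tofrac_eq => /eqP E.
  by move: (size_polyXn rat n); rewrite E size_poly1 => -[].
case: k => n /=; first by move/H => ->.
by move/(congr1 (fun x => x^-1)); rewrite invrK invr1 => /H.
Qed.

Lemma fC_neq0 x : x != 0 -> fC x != 0.
Proof. by move=> x0; rewrite /fC /= tofrac_eq0 polyC_eq0. Qed.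

Lemma fC_inj : injective fC.
Proof. by move=> x y /eqP; rewrite /fC /= tofrac_eq => /eqP /polyC_inj. Qed.

Lemma const_t (x y : rat) (k : int) : x != 0 -> fC x * t ^ k = fC y -> k = 0.
Proof.
move=> x0 E.
have E2 := congr1 bar E; rewrite barM barC bartz barC -E in E2.
have := mulfI (fC_neq0 x0) E2 => /(congr1 (fun z => z * t ^ k)).
rewrite -exprzDr ?t_unit // addNr expr0z -exprzDr ?t_unit // => /esym /tpow_eq1.
by lia.
Qed.

Lemma Nf_ge0 p1 p2 y : Nf p1 p2 = fC y -> 0 <= y.
Proof.
move=> E.
set m := maxn (size p1) (size p2).
have h1 : (size p1 <= m.+1)%N by rewrite /m; lia.
have h2 : (size p2 <= m.+1)%N by rewrite /m; lia.
have Pt : Phi * t = tofrac (1 + 'X + 'X^2).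
  rewrite /Phi !tofracD tofrac1 tofracXn -/tvar !mulrDl mul1r mulVf ?t_neq0 //.
  rewrite expr2; ring.
have : Nf p1 p2 * t ^+ m.+1 = t * (tofrac p1 * (s p1 * t ^+ m)) + (Phi * t) * (tofrac p2 * (s p2 * t ^+ m)).
  rewrite /Nf exprS; ring.
rewrite (rvE h1) (rvE h2) Pt E /tvar -!rmorphM -rmorphD /fC /= -rmorphXn -rmorphM.
move/eqP; rewrite tofrac_eq => /eqP /(congr1 (horner^~ 1)).
rewrite hornerM hornerC hornerXn expr1n mulr1 hornerD !hornerM !rv1 hornerX !hornerD hornerXn hornerX hornerC expr1n => ->.
have q1 := sqr_ge0 p1.[1]; have q2 := sqr_ge0 p2.[1].
rewrite !expr2 in q1 q2.
rewrite mul1r; apply: addr_ge0 => //; apply: mulr_ge0 => //.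
Qed.

Lemma det2 (R : comNzRingType) (M : 'M[R]_2) : \det M = M 0 0 * M 1 1 - M 0 1 * M 1 0.
Proof.
rewrite (expand_det_row _ 0) !big_ord_recl big_ord0 addr0 /cofactor.
rewrite !det_mx11 !mxE /=.
have -> : lift (0 : 'I_2) (0 : 'I_1) = 1 by apply/val_inj.
have -> : lift (1 : 'I_2) (0 : 'I_1) = 0 by apply/val_inj.
have -> : (ord0 : 'I_2) = 0 by apply/val_inj.
rewrite /bump /= expr0 expr1 !mul1r mulN1r mulrN.
done.
Qed.

Lemma bar_g p k : bar (tofrac p / t ^+ k) = s p * t ^+ k.
Proof.
rewrite /tvar -tofracXn barE ?expf_neq0 ?polyX_eq0 // sXn -/tvar.
by rewrite tofracXn exprVn invrK.
Qed.

Lemma det_quat p1 k1 p2 k2 :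
  \det (quat_mx (tofrac p1 / t ^+ k1) (tofrac p2 / t ^+ k2)) = Nf p1 p2.
Proof.
have tk1 : t ^+ k1 != 0 by exact: expf_neq0 t_neq0.
have tk2 : t ^+ k2 != 0 by exact: expf_neq0 t_neq0.
have H1 (x y z : QT) : y != 0 -> x / y * (z * y) = x * z.
  by move=> y0; rewrite mulrA mulrAC divfK.
have H2 (x y z P : QT) : y != 0 -> x / y * (P * (z * y)) = P * (x * z).
  by move=> y0; rewrite mulrCA H1.
rewrite det2 !mxE /= !bar_g /Nf mulrN opprK (H1 _ _ _ tk1) (H2 _ _ _ _ tk2). reflexivity.
Qed.

Lemma selfbar (x : rat) (k : int) : x != 0 -> fC x * t ^ (- k) = fC x * t ^ k -> k = 0.
Proof.
move=> x0 E2.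
have := mulfI (fC_neq0 x0) E2 => /(congr1 (fun z => z * t ^ k)).
rewrite -exprzDr ?t_unit // addNr expr0z -exprzDr ?t_unit // => /esym /tpow_eq1.
by lia.
Qed.

Lemma detsc (a e : rat) (i l : int) :
  (fC a * t ^ i) ^+ 2 * (fC e * t ^ l) = fC (a ^+ 2 * e) * t ^ (i + i + l).
Proof.
have fCM x y : fC (x * y) = fC x * fC y by exact: (rmorphM fC).
have fCX x n : fC (x ^+ n) = fC x ^+ n by exact: (rmorphXn fC).
rewrite !exprzDr ?t_unit // fCM fCX.
rewrite !expr2; ring.
Qed.

Lemma fCM x y : fC (x * y) = fC x * fC y. Proof. exact: (rmorphM fC). Qed.
Lemma fCX x n : fC (x ^+ n) = fC x ^+ n. Proof. exact: (rmorphXn fC). Qed.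
Lemma fCN1 : fC (-1) = -1. Proof. exact: (rmorphN1 fC). Qed.
Lemma fC1 : fC 1 = 1. Proof. exact: (rmorph1 fC). Qed.

Theorem corollary4p10 :
  forall A : 'M[QT]_2, GL2Q A -> (in_U A <-> in_U1 A).
Proof.
move=> A [_ [e [l [e0 dA]]]]; split; last by case.
move=> HU; split => //.
case: (HU) => [[u [g1 [g2 [[a [i [a0 Hu]]] [p1 [k1 Hg1]] [p2 [k2 Hg2]] E]]]] [v [[b [j [b0 Hv]]] [_ [bb [n dZ]]]]]].
change (tofrac a%:P) with (fC a) in Hu.
change (tofrac b%:P) with (fC b) in Hv.
change (tofrac e%:P) with (fC e) in dA.
have N1 : Nf p1 p2 = fC (a^+2 * e) * t ^ (i + i + l).
  by rewrite -(det_quat p1 k1 p2 k2) -Hg1 -Hg2 -E detZ Hu dA detsc.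
have X0 : a ^+ 2 * e != 0 by rewrite mulf_neq0 // expf_neq0.
have K0 : i + i + l = 0.
  apply: (selfbar X0).
  by have := barNf p1 p2; rewrite N1 barM barC bartz.
have NV : fC (b^+2 * e) * t ^ (j + j + l) = (-1) ^+ bb * t ^ n.
  by rewrite -detsc -dA -Hv -detZ dZ.
have Y0 : b ^+ 2 * e != 0 by rewrite mulf_neq0 // expf_neq0.
have NV2 : fC (b^+2 * e) * t ^ (j + j + l - n) = fC ((-1) ^+ bb).
  rewrite exprzDr ?t_unit // mulrA NV -mulrA -exprzDr ?t_unit // subrr expr0z mulr1.
  by rewrite fCX fCN1.
have K1 := const_t Y0 NV2.
rewrite K1 expr0z mulr1 in NV2.
have NV3 := fC_inj NV2.
have N0 : Nf p1 p2 = fC (a^+2 * e) by rewrite N1 K0 expr0z mulr1.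
have G0 := Nf_ge0 N0.
have ha : 0 < a ^+ 2 by rewrite exprn_even_gt0 // a0 orbT.
have hb : 0 < b ^+ 2 by rewrite exprn_even_gt0 // b0 orbT.
case: bb NV3 {NV NV2 dZ} => /= NV3.
  exfalso.
  have : 0 <= a ^+ 2 * e * b ^+ 2 by apply: mulr_ge0 => //; apply: ltW.
  have -> : a ^+ 2 * e * b ^+ 2 = - a ^+ 2 by rewrite mulrAC -mulrA NV3 ?expr1 mulrN1.
  by rewrite oppr_ge0 leNgt ha.
exists (fC b * t ^ i); split; first by exists b, i; split.
by rewrite detZ dA detsc K0 expr0z mulr1 NV3 expr0 fC1.
Qed.
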